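(* Let $h>0$ be such that $D(q):=\big(I_d+\frac{h^2}{2}\nabla^2F(q)M\big)^{-1}$ exists for every $q\in\mathbb{R}^d$. Then for every $n\ge 1$ and every fixed realization of the Wiener increments, the map $(p,q)\mapsto(P^h[n],Q^h[n])$ defined by the scheme started at $(P^h[0],Q^h[0])=(p,q)$ has Jacobian determinant $$\det\frac{\partial(P^h[n],Q^h[n])}{\partial(p,q)}=e^{-v t_n d},\qquad t_n=nh.$$
   Context: Let $d\le m$, $F\in C^\infty(\mathbb{R}^d,\mathbb{R})$, $f=\nabla F$, $M\in\mathbb{R}^{d\times d}$ symmetric positive definite, $v>0$, $\sigma=(\sigma_1,\dots,\sigma_m)\in\mathbb{R}^{d\times m}$, $W$ a standard $m$-dimensional Wiener process. For a step size $h>0$, $t_n=nh$, $\Delta_{n+1}W=W(t_{n+1})-W(t_n)$, the scheme is $$P^h[n+1]=e^{-vh}P^h[n]-\tfrac{h^2}{2}\nabla^2F(Q^h[n])MP^h[n+1]-h\big(1+\tfrac{vh}{2}\big)e^{-vh}f(Q^h[n])-\big(1+\tfrac{vh}{2}\big)e^{-vh}\sigma\Delta_{n+1}W,$$ $$Q^h[n+1]=Q^h[n]+h\big(1-\tfrac{vh}{2}\big)e^{vh}MP^h[n+1]+\tfrac{h^2}{2}Mf(Q^h[n])+\tfrac{h}{2}M\sigma\Delta_{n+1}W,$$ with the first equation solved for $P^h[n+1]$. *)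

(* Defs.v *)
From Stdlib Require Import Reals.
From mathcomp Require Import all_boot all_fingroup.
Set Implicit Arguments. Unset Strict Implicit. Unset Printing Implicit Defensive.

Local Open Scope R_scope.

Definition vec (n : nat) := 'I_n -> R.
Definition rmat (n m : nat) := 'I_n -> 'I_m -> R.

Definition rsum (n : nat) (g : 'I_n -> R) : R := \big[Rplus/0]_(i < n) g i.

Definition mulmv (n m : nat) (A : rmat n m) (x : vec m) : vec n :=
  fun i => rsum (fun j => A i j * x j).
Definition mulmm (n k m : nat) (A : rmat n k) (B : rmat k m) : rmat n m :=
  fun i j => rsum (fun l => A i l * B l j).
Definition rid (n : nat) : rmat n n := fun i j => if i == j then 1 else 0.
Arguments rid n : clear implicits.

Definition rdet (n : nat) (A : rmat n n) : R :=
  \big[Rplus/0]_(s : 'S_n)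
     ((if odd_perm s then -1 else 1) * \big[Rmult/1]_(i < n) A i (s i)).

Definition invertible (n : nat) (A : rmat n n) : Prop :=
  exists B : rmat n n, mulmm B A = rid n /\ mulmm A B = rid n.

Definition upd (n : nat) (x : vec n) (j : 'I_n) (t : R) : vec n :=
  fun k => if k == j then t else x k.

Definition is_partial (n : nat) (g : vec n -> R) (x : vec n) (j : 'I_n) (l : R) : Prop :=
  derivable_pt_lim (fun t => g (upd x j t)) (x j) l.

Definition rcontinuous (n : nat) (g : vec n -> R) : Prop :=
  forall x eps, 0 < eps -> exists delta, 0 < delta /\
    forall y : vec n, (forall i, Rabs (y i - x i) < delta) -> Rabs (g y - g x) < eps.

Fixpoint Ck (n : nat) (k : nat) (g : vec n -> R) : Prop :=
  match k with
  | O => rcontinuous g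
  | S k' => rcontinuous g /\ exists G : 'I_n -> vec n -> R,
      (forall x j, is_partial g x j (G j x)) /\ (forall j, Ck k' (G j))
  end.

Definition smooth (n : nat) (g : vec n -> R) : Prop := forall k, Ck k g.

Definition sym_posdef (n : nat) (M : rmat n n) : Prop :=
  (forall i j, M i j = M j i) /\
  (forall x : vec n, (exists i, x i <> 0) -> 0 < rsum (fun i => rsum (fun j => x i * M i j * x j))).

(* phase space R^{2d} = R^d x R^d, first block p, second block q *)
Definition zP (d : nat) (z : vec (d + d)) : vec d := fun i => z (lshift d i).
Definition zQ (d : nat) (z : vec (d + d)) : vec d := fun i => z (rshift d i).
Definition pair_vec (d : nat) (p q : vec d) : vec (d + d) :=
  fun k => match split k with inl i => p i | inr i => q i end.

(* One step of the scheme (first equation in implicit form).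
   Hs = Hessian of F, noise = sigma Delta_{n+1} W. *)
Definition scheme_step (d : nat) (f : vec d -> vec d) (Hs : vec d -> rmat d d)
  (M : rmat d d) (v h : R) (noise : vec d) (P0 Q0 P1 Q1 : vec d) : Prop :=
  forall i : 'I_d,
   P1 i = exp (- v * h) * P0 i
          - h ^ 2 / 2 * mulmv (Hs Q0) (mulmv M P1) i
          - h * (1 + v * h / 2) * exp (- v * h) * f Q0 i
          - (1 + v * h / 2) * exp (- v * h) * noise i
   /\
   Q1 i = Q0 i + h * (1 - v * h / 2) * exp (v * h) * mulmv M P1 i
          + h ^ 2 / 2 * mulmv M (f Q0) i
          + h / 2 * mulmv M noise i.

(* Main.v *)
Require Import Defs.
From Stdlib Require Import Reals Lra.
From mathcomp Require Import all_boot all_fingroup all_algebra.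
From mathcomp Require Import Rstruct.
From Stdlib Require Import IndefiniteDescription FunctionalExtensionality.
Import GRing.Theory.
Local Open Scope R_scope.

Section Part1.
Set Implicit Arguments. Unset Strict Implicit. Unset Printing Implicit Defensive.
Local Open Scope R_scope.

Lemma mychoice (A B : Type) (P : A -> B -> Prop) :
  (forall a, exists b, P a b) -> exists g : A -> B, forall a, P a (g a).
Proof.
move=> H; exists (fun a => proj1_sig (constructive_indefinite_description _ (H a))).
move=> a; exact: (proj2_sig (constructive_indefinite_description _ (H a))).
Qed.

Definition tends (f : R -> R) t0 a := forall eps, 0 < eps -> exists del, 0 < del /\
  forall t, Rabs (t - t0) < del -> Rabs (f t - a) < eps.

Lemma der_cont f t0 l : derivable_pt_lim f t0 l -> tends f t0 (f t0).
Proof.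
move=> H.
have Hc := derivable_continuous_pt f t0 (exist _ l H).
move=> eps Heps; have [al [Hal Hb]] := Hc eps Heps.
exists al; split => // t Ht.
case: (Req_dec t t0) => [->|Hne]; first by rewrite Rminus_eq_0 Rabs_R0.
apply: Hb; repeat split => //; by auto.
Qed.

Lemma near_all n (Pr : 'I_n -> R -> Prop) t0 :
  (forall i, exists del, 0 < del /\ forall t, Rabs (t - t0) < del -> Pr i t) ->
  exists del, 0 < del /\ forall t, Rabs (t - t0) < del -> forall i, Pr i t.
Proof.
elim: n Pr => [|n IH] Pr H.
  by exists 1; split; [lra| move=> t _ []].
have [d1 [Hd1 H1]] := IH (fun i => Pr (lift ord0 i)) (fun i => H (lift ord0 i)).
have [d0 [Hd0 H0]] := H ord0.
exists (Rmin d0 d1); split; first by apply: Rmin_pos.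
move=> t Ht i.
have Ht0 : Rabs (t - t0) < d0 by apply: Rlt_le_trans Ht (Rmin_l _ _).
have Ht1 : Rabs (t - t0) < d1 by apply: Rlt_le_trans Ht (Rmin_r _ _).
case: (unliftP ord0 i) => [j ->|->]; first exact: H1.
exact: H0.
Qed.

Lemma der_ext f g t0 l : (forall t, f t = g t) -> derivable_pt_lim f t0 l -> derivable_pt_lim g t0 l.
Proof. by move=> H; have -> : g = f by apply: functional_extensionality => t; rewrite H. Qed.

Lemma der_eqv f t0 l1 l2 : l1 = l2 -> derivable_pt_lim f t0 l1 -> derivable_pt_lim f t0 l2.
Proof. by move=> ->. Qed.

Lemma der_rsum n (F : 'I_n -> R -> R) (l : 'I_n -> R) t0 :
  (forall i, derivable_pt_lim (F i) t0 (l i)) ->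
  derivable_pt_lim (fun t => rsum (fun i => F i t)) t0 (rsum l).
Proof.
elim: n F l => [|n IH] F l H.
  rewrite /rsum big_ord0; apply: der_ext (derivable_pt_lim_const 0 t0) => t.
  by rewrite big_ord0.
rewrite /rsum big_ord_recl.
apply: der_ext (derivable_pt_lim_plus _ _ _ _ _ (H ord0)
   (IH (fun i => F (lift ord0 i)) (fun i => l (lift ord0 i)) (fun i => H _))) => t.
by rewrite /plus_fct /rsum big_ord_recl.
Qed.

Lemma der_prod0 (al be : R -> R) a b t0 :
  tends al t0 a -> be t0 = 0 -> derivable_pt_lim be t0 b ->
  derivable_pt_lim (fun t => al t * be t) t0 (a * b).
Proof.
move=> Ha Hb0 Hb eps Heps.
set e1 := Rmin 1 (eps / (2 * (Rabs a + 1))).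
set e2 := eps / (2 * (Rabs b + 1)).
have Ha0 := Rabs_pos a; have Hb0' := Rabs_pos b.
have He1 : 0 < e1 by apply: Rmin_pos; [lra| apply: Rdiv_lt_0_compat; lra].
have He2 : 0 < e2 by apply: Rdiv_lt_0_compat; lra.
have [d1 Hd1] := Hb e1 He1.
have [d2 [Hd2 H2]] := Ha e2 He2.
have Hd1p := cond_pos d1.
exists (mkposreal (Rmin d1 d2) (Rmin_pos _ _ Hd1p Hd2)) => hh Hh0 Hhl /=.
have Hhl1 : Rabs hh < d1 by apply: Rlt_le_trans Hhl (Rmin_l _ _).
have Hhl2 : Rabs hh < d2 by apply: Rlt_le_trans Hhl (Rmin_r _ _).
have Hw := Hd1 hh Hh0 Hhl1.
have Hu : Rabs (al (t0 + hh) - a) < e2 by apply: H2; rewrite /Rminus Rplus_comm -Rplus_assoc Rplus_opp_l Rplus_0_l.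
rewrite Hb0 Rmult_0_r Rminus_0_r in Hw *.
set u := al (t0 + hh) - a in Hu.
set w := be (t0 + hh) / hh - b in Hw.
have -> : (al (t0 + hh) * be (t0 + hh) - 0) / hh - a * b = a * w + u * b + u * w.
  rewrite /u /w; field; lra.
have He1a : e1 <= 1 := Rmin_l _ _.
have He1b : e1 <= eps / (2 * (Rabs a + 1)) := Rmin_r _ _.
have Hae : Rabs a * e1 <= eps / 2.
  apply: Rle_trans (Rmult_le_compat_l _ _ _ Ha0 He1b) _.
  apply: (Rmult_le_reg_r (2 * (Rabs a + 1))); first lra.
  have -> : Rabs a * (eps / (2 * (Rabs a + 1))) * (2 * (Rabs a + 1)) = Rabs a * eps by field; lra.
  nra.
have Hbe : e2 * (Rabs b + 1) = eps / 2 by rewrite /e2; field; lra.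
apply: Rle_lt_trans (Rabs_triang _ _) _.
apply: Rle_lt_trans (Rplus_le_compat_r _ _ _ (Rabs_triang _ _)) _.
rewrite !Rabs_mult.
have Hw0 := Rabs_pos w; have Hu0 := Rabs_pos u.
nra.
Qed.

End Part1.

Section Part2.
Set Implicit Arguments. Unset Strict Implicit. Unset Printing Implicit Defensive.
Local Open Scope R_scope.

Lemma upd_same n (x : vec n) j t : upd x j t j = t.
Proof. by rewrite /upd eqxx. Qed.
Lemma upd_upd n (x : vec n) j s t : upd (upd x j s) j t = upd x j t.
Proof. apply: functional_extensionality => i; rewrite /upd; by case: (i == j). Qed.
Lemma upd_id n (x : vec n) j : upd x j (x j) = x.
Proof. apply: functional_extensionality => i; rewrite /upd; by case: eqP => [->|]. Qed.

Lemma partial_at n (g : vec n -> R) G k (Hg : forall x j, is_partial g x j (G j x)) y s :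
  derivable_pt_lim (fun s' => g (upd y k s')) s (G k (upd y k s)).
Proof.
have := Hg (upd y k s) k; rewrite /is_partial upd_same.
apply: der_ext => s'; by rewrite upd_upd.
Qed.

Lemma mvt_gen (phi phi' : R -> R) a b : (forall s, derivable_pt_lim phi s (phi' s)) ->
  exists xi, Rabs (xi - a) <= Rabs (b - a) /\ phi b - phi a = phi' xi * (b - a).
Proof.
move=> H.
case: (Rtotal_order a b) => [Hab|[->|Hab]].
- have [c [Hc2 Hc1]] := MVT_cor2 phi phi' _ _ Hab (fun c _ => H c).
  exists c; split => //.
  unfold Rabs; destruct Rcase_abs; destruct Rcase_abs; lra.
- exists b; split; first by right.
  rewrite !Rminus_eq_0; ring.
- have [c [Hc2 Hc1]] := MVT_cor2 phi phi' _ _ Hab (fun c _ => H c).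
  exists c; split.
  + unfold Rabs; destruct Rcase_abs; destruct Rcase_abs; lra.
  + have -> : phi b - phi a = - (phi a - phi b) by ring.
    rewrite Hc2; ring.
Qed.

Lemma tele n (u : nat -> R) : rsum (fun i : 'I_n => u i.+1 - u i) = u n - u 0%N.
Proof.
elim: n => [|n IH]; first by rewrite /rsum big_ord0; ring.
rewrite /rsum big_ord_recr /=.
transitivity (u n - u 0%N + (u n.+1 - u n)); last ring.
congr (_ + _); exact: IH.
Qed.

Lemma chain n (g : vec n -> R) (G : 'I_n -> vec n -> R)
  (Hg : forall x j, is_partial g x j (G j x)) (HG : forall j, rcontinuous (G j))
  (c : R -> vec n) (dc : vec n) t0 :
  (forall i, derivable_pt_lim (fun t => c t i) t0 (dc i)) ->
  derivable_pt_lim (fun t => g (c t)) t0 (rsum (fun i => G i (c t0) * dc i)).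
Proof.
move=> Hc.
pose y (k : nat) t : vec n := fun i => if (i < k)%N then c t i else c t0 i.
have Hyk : forall (k : 'I_n) t, y k.+1 t = upd (y k t) k (c t k).
  move=> k t; apply: functional_extensionality => i; rewrite /y /upd ltnS leq_eqVlt.
  case: (eqVneq i k) => [->|Hne]; first by rewrite eqxx.
  have Hne' : (nat_of_ord i == nat_of_ord k) = false by apply: negbTE; exact: Hne.
  by rewrite Hne'.
have Hy0 : forall (k : 'I_n) t, y k t = upd (y k t) k (c t0 k).
  move=> k t; apply: functional_extensionality => i; rewrite /y /upd.
  by case: (eqVneq i k) => [->|//]; rewrite ltnn.
have Hyn : forall t, y n t = c t.
  by move=> t; apply: functional_extensionality => i; rewrite /y ltn_ord.
have HyO : forall t, y 0%N t = c t0.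
  by move=> t; apply: functional_extensionality => i; rewrite /y.
have Hm : forall kt : 'I_n * R, exists xi, Rabs (xi - c t0 kt.1) <= Rabs (c kt.2 kt.1 - c t0 kt.1) /\
   g (y kt.1.+1 kt.2) - g (y kt.1 kt.2) = G kt.1 (upd (y kt.1 kt.2) kt.1 xi) * (c kt.2 kt.1 - c t0 kt.1).
  move=> [k t] /=.
  have [xi [H1 H2]] := mvt_gen (c t0 k) (c t k) (partial_at k Hg (y k t)).
  exists xi; split => //; rewrite Hyk.
  have -> : g (y k t) = g (upd (y k t) k (c t0 k)) by rewrite -Hy0.
  exact: H2.
have [Xi HXi] := mychoice Hm.
pose al k t := G k (upd (y k t) k (Xi (k, t))).
have Hid : forall t, g (c t) = g (c t0) + rsum (fun k => al k t * (c t k - c t0 k)).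
  move=> t.
  have -> : rsum (fun k => al k t * (c t k - c t0 k)) = rsum (fun k : 'I_n => g (y k.+1 t) - g (y k t)).
    by apply: eq_bigr => k _; rewrite (proj2 (HXi (k, t))).
  rewrite (tele n (fun k => g (y k t))) Hyn HyO; ring.
apply: der_ext (fun t => esym (Hid t)) _.
apply: der_eqv (Rplus_0_l _) _.
apply: derivable_pt_lim_plus; first exact: derivable_pt_lim_const.
apply: der_rsum => k.
apply: der_prod0.
- move=> eps Heps.
  have [dG [HdG HG']] := HG k (c t0) eps Heps.
  have [del [Hdel Hd]] := near_all (Pr := fun i t => Rabs (c t i - c t0 i) < dG) (t0 := t0)
    (fun i => der_cont (Hc i) HdG).
  exists del; split => // t Ht; apply: HG' => i.
  apply: Rle_lt_trans (Hd t Ht i).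
  rewrite /upd /y; case: (eqVneq i k) => [->|_].
  + exact: (proj1 (HXi (k, t))).
  + case: (i < k)%N; first by right.
    rewrite Rminus_eq_0 Rabs_R0; exact: Rabs_pos.
- by rewrite Rminus_eq_0.
- apply: der_eqv (Rminus_0_r _) _.
  apply: derivable_pt_lim_minus; [exact: Hc | exact: derivable_pt_lim_const].
Qed.

End Part2.

From mathcomp Require Import ring.

Section Part3.
Set Implicit Arguments. Unset Strict Implicit. Unset Printing Implicit Defensive.

Lemma smooth_partial n (g : vec n -> R) (G : 'I_n -> vec n -> R) :
  smooth g -> (forall x j, is_partial g x j (G j x)) -> forall j, smooth (G j).
Proof.
move=> Hs HG j k; have [_ [G' [HG' Hk]]] := Hs k.+1.
have -> : G j = G' j.
  apply: functional_extensionality => x; exact: uniqueness_limite (HG x j) (HG' x j).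
exact: Hk.
Qed.

Lemma smooth_cont n (g : vec n -> R) : smooth g -> rcontinuous g.
Proof. by move=> Hs; exact: (Hs 0%N). Qed.

Lemma smooth_C1 n (g : vec n -> R) : smooth g -> exists G : 'I_n -> vec n -> R,
  (forall x j, is_partial g x j (G j x)) /\ forall j, rcontinuous (G j).
Proof. by move=> Hs; have [_ [G [H1 H2]]] := Hs 1%N; exists G. Qed.

Local Open Scope ring_scope.

Definition exd (f : R -> R) t0 := exists l, derivable_pt_lim f t0 l.

Definition mder m n (A : R -> 'M[R]_(m,n)) t0 (A' : 'M[R]_(m,n)) :=
  forall i j, derivable_pt_lim (fun t => A t i j) t0 (A' i j).
Definition mex m n (A : R -> 'M[R]_(m,n)) t0 :=
  forall i j, exd (fun t => A t i j) t0.

Lemma mder_ex m n (A : R -> 'M[R]_(m,n)) t0 A' : mder A t0 A' -> mex A t0.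
Proof. by move=> H i j; exists (A' i j). Qed.

Lemma mex_der m n (A : R -> 'M[R]_(m,n)) t0 : mex A t0 -> exists A', mder A t0 A'.
Proof.
move=> H.
have [g Hg] := mychoice (P := fun (ij : 'I_m * 'I_n) l => derivable_pt_lim (fun t => A t ij.1 ij.2) t0 l)
   (fun ij => H ij.1 ij.2).
exists (\matrix_(i, j) g (i, j)) => i j; rewrite mxE; exact: (Hg (i, j)).
Qed.

Lemma mder_unique m n (A : R -> 'M[R]_(m,n)) t0 A1 A2 : mder A t0 A1 -> mder A t0 A2 -> A1 = A2.
Proof. move=> H1 H2; apply/matrixP => i j; exact: uniqueness_limite (H1 i j) (H2 i j). Qed.

Lemma mder_const m n (B : 'M[R]_(m,n)) t0 : mder (fun _ => B) t0 0.
Proof. move=> i j; rewrite mxE; exact: derivable_pt_lim_const. Qed.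

Lemma mder_add m n (A B : R -> 'M[R]_(m,n)) t0 A' B' :
  mder A t0 A' -> mder B t0 B' -> mder (fun t => A t + B t) t0 (A' + B').
Proof.
move=> HA HB i j; rewrite mxE.
apply: der_ext (derivable_pt_lim_plus _ _ _ _ _ (HA i j) (HB i j)) => t.
by rewrite mxE.
Qed.

Lemma mder_opp m n (A : R -> 'M[R]_(m,n)) t0 A' :
  mder A t0 A' -> mder (fun t => - A t) t0 (- A').
Proof.
move=> HA i j; rewrite mxE.
apply: der_ext (derivable_pt_lim_opp _ _ _ (HA i j)) => t.
by rewrite mxE.
Qed.

Lemma mder_sub m n (A B : R -> 'M[R]_(m,n)) t0 A' B' :
  mder A t0 A' -> mder B t0 B' -> mder (fun t => A t - B t) t0 (A' - B').
Proof. by move=> HA HB; apply: mder_add => //; apply: mder_opp. Qed.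

Lemma mder_scale m n (A : R -> 'M[R]_(m,n)) t0 A' k :
  mder A t0 A' -> mder (fun t => k *: A t) t0 (k *: A').
Proof.
move=> HA i j; rewrite mxE.
apply: der_ext (derivable_pt_lim_scal _ k _ _ (HA i j)) => t.
by rewrite mxE.
Qed.

Lemma mder_mul m n p (A : R -> 'M[R]_(m,n)) (B : R -> 'M[R]_(n,p)) t0 A' B' :
  mder A t0 A' -> mder B t0 B' ->
  mder (fun t => A t *m B t) t0 (A' *m B t0 + A t0 *m B').
Proof.
move=> HA HB i j.
have H : derivable_pt_lim (fun t => rsum (fun k => A t i k * B t k j)) t0
   (rsum (fun k => A' i k * B t0 k j + A t0 i k * B' k j)).
  apply: der_rsum => k.
  exact: (derivable_pt_lim_mult _ _ _ _ _ (HA i k) (HB k j)).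
apply: der_eqv (der_ext _ H).
  by rewrite !mxE -big_split.
by move=> t; rewrite mxE.
Qed.

Lemma exd_ext f g t0 : (forall t, f t = g t) -> exd f t0 -> exd g t0.
Proof. by move=> H [l Hl]; exists l; apply: der_ext Hl. Qed.

Lemma exd_const k t0 : exd (fun _ => k) t0.
Proof. by exists 0; exact: derivable_pt_lim_const. Qed.

Lemma exd_add f g t0 : exd f t0 -> exd g t0 -> exd (fun t => f t + g t) t0.
Proof. by move=> [l1 H1] [l2 H2]; eexists; exact: derivable_pt_lim_plus H1 H2. Qed.

Lemma exd_mul f g t0 : exd f t0 -> exd g t0 -> exd (fun t => f t * g t) t0.
Proof. by move=> [l1 H1] [l2 H2]; eexists; exact: derivable_pt_lim_mult H1 H2. Qed.

Lemma exd_div f g t0 : exd f t0 -> exd g t0 -> g t0 <> 0 -> exd (fun t => f t / g t) t0.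
Proof. by move=> [l1 H1] [l2 H2] Hg; eexists; exact: derivable_pt_lim_div H1 H2 Hg. Qed.

Lemma exd_bigsum (I : Type) (r : seq I) (P : pred I) (F : I -> R -> R) t0 :
  (forall i, exd (F i) t0) -> exd (fun t => \sum_(i <- r | P i) F i t) t0.
Proof.
move=> H; elim: r => [|a r IH].
  by apply: exd_ext (exd_const 0 t0) => t; rewrite big_nil.
case: (boolP (P a)) => Pa.
  by apply: exd_ext (exd_add (H a) IH) => t; rewrite big_cons Pa.
by apply: exd_ext IH => t; rewrite big_cons (negbTE Pa).
Qed.

Lemma exd_bigprod (I : Type) (r : seq I) (P : pred I) (F : I -> R -> R) t0 :
  (forall i, exd (F i) t0) -> exd (fun t => \prod_(i <- r | P i) F i t) t0.
Proof.
move=> H; elim: r => [|a r IH].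
  by apply: exd_ext (exd_const 1 t0) => t; rewrite big_nil.
case: (boolP (P a)) => Pa.
  by apply: exd_ext (exd_mul (H a) IH) => t; rewrite big_cons Pa.
by apply: exd_ext IH => t; rewrite big_cons (negbTE Pa).
Qed.

Lemma mex_det n (A : R -> 'M[R]_n) t0 : mex A t0 -> exd (fun t => \det (A t)) t0.
Proof.
move=> H; rewrite /determinant.
apply: exd_bigsum => s.
apply: exd_mul; first exact: exd_const.
by apply: exd_bigprod => i; exact: H.
Qed.

Lemma mex_inv n (K : R -> 'M[R]_n) t0 : (forall t, K t \in unitmx) -> mex K t0 ->
  mex (fun t => invmx (K t)) t0.
Proof.
move=> HU HK i j.
have Hd : exd (fun t => \det (K t)) t0 by exact: mex_det.
have Hc : exd (fun t => \adj (K t) i j) t0.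
  apply: (@exd_ext (fun t => (-1) ^+ (j + i) * \det (row' j (col' i (K t))))) => [t|]; first by rewrite mxE /cofactor.
  apply: exd_mul; first exact: exd_const.
  apply: mex_det => a b.
  by apply: exd_ext (HK (lift j a) (lift i b)) => t; rewrite !mxE.
apply: exd_ext (exd_div Hc Hd _) => [t|].
  by rewrite /invmx HU [RHS]mxE mulrC.
have := HU t0; rewrite unitmxE unitfE => /eqP; done.
Qed.

End Part3.

Section Part4.
Set Implicit Arguments. Unset Strict Implicit. Unset Printing Implicit Defensive.
Local Open Scope ring_scope.

Definition cv n (x : vec n) : 'cV[R]_n := \col_i x i.
Definition mxr m n (A : rmat m n) : 'M[R]_(m,n) := \matrix_(i, j) A i j.

Lemma mxrE m n (A : rmat m n) i j : mxr A i j = A i j.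
Proof. by rewrite mxE. Qed.
Lemma cvE n (x : vec n) i k : cv x i k = x i.
Proof. by rewrite mxE. Qed.

Lemma cv_mulmv m n (A : rmat m n) x : cv (mulmv A x) = mxr A *m cv x.
Proof.
apply/matrixP => i k; rewrite !mxE /mulmv /rsum; apply: eq_bigr => j _; by rewrite !mxE.
Qed.

Lemma mulmvE m n (A : rmat m n) x i : mulmv A x i = (mxr A *m cv x) i 0.
Proof. by rewrite -cv_mulmv mxE. Qed.

Lemma mder_ext m n (A B : R -> 'M[R]_(m,n)) t0 A' :
  (forall t, A t = B t) -> mder A t0 A' -> mder B t0 A'.
Proof. by move=> H HA i j; apply: der_ext (HA i j) => t; rewrite H. Qed.

Lemma mder_eqv m n (A : R -> 'M[R]_(m,n)) t0 A1 A2 : A1 = A2 -> mder A t0 A1 -> mder A t0 A2.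
Proof. by move=> ->. Qed.

Lemma mder_mull m n p (B : 'M[R]_(m,n)) (A : R -> 'M[R]_(n,p)) t0 A' :
  mder A t0 A' -> mder (fun t => B *m A t) t0 (B *m A').
Proof.
move=> HA; apply: mder_eqv (mder_mul (mder_const B t0) HA).
by rewrite mul0mx add0r.
Qed.

Lemma mder_mulr m n p (A : R -> 'M[R]_(m,n)) (B : 'M[R]_(n,p)) t0 A' :
  mder A t0 A' -> mder (fun t => A t *m B) t0 (A' *m B).
Proof.
move=> HA; apply: mder_eqv (mder_mul HA (mder_const B t0)).
by rewrite mulmx0 addr0.
Qed.

Lemma der_eqv_ext f g t0 l1 l2 : l1 = l2 -> (forall t, f t = g t) ->
  derivable_pt_lim f t0 l1 -> derivable_pt_lim g t0 l2.
Proof. move=> -> H; exact: der_ext. Qed.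

Definition Tmat d (DH : 'I_d -> 'I_d -> 'I_d -> vec d -> R) (q : vec d) (w : 'cV[R]_d) : 'M[R]_d :=
  \matrix_(i, m) \sum_l DH i l m q * w l 0.

Definition Astep d (Hs : vec d -> rmat d d) DH (M : rmat d d) (E a b c : R) (q0 p1 : vec d)
  : 'M[R]_(d + d) :=
  let H := mxr (Hs q0) in let Mm := mxr M in
  let D := invmx (1%:M + c *: (H *m Mm)) in
  let X := E *: D in
  let Y := - (D *m (b *: H + c *: Tmat DH q0 (Mm *m cv p1))) in
  block_mx X Y (a *: (Mm *m X)) (1%:M + a *: (Mm *m Y) + c *: (Mm *m H)).

Lemma step d (f : vec d -> vec d) (Hs : vec d -> rmat d d) DH (M : rmat d d)
  (E a b c e g : R) (noise : vec d)
  (Hf : forall i q j, is_partial (fun x => f x i) q j (Hs q i j))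
  (HHc : forall i j, rcontinuous (fun x => Hs x i j))
  (HDH : forall i j q l, is_partial (fun x => Hs x i j) q l (DH i j l q))
  (HDHc : forall i j l, rcontinuous (DH i j l))
  (HU : forall q, 1%:M + c *: (mxr (Hs q) *m mxr M) \in unitmx)
  (P0 Q0 P1 Q1 : R -> vec d) t0 (dz : 'cV[R]_(d + d))
  (HP1 : forall t i, P1 t i = E * P0 t i - c * mulmv (Hs (Q0 t)) (mulmv M (P1 t)) i
                      - b * f (Q0 t) i - g * noise i)
  (HQ1 : forall t i, Q1 t i = Q0 t i + a * mulmv M (P1 t) i + c * mulmv M (f (Q0 t)) i
                      + e * mulmv M noise i)
  (HdP : forall i, derivable_pt_lim (fun t => P0 t i) t0 (dz (lshift d i) 0))
  (HdQ : forall i, derivable_pt_lim (fun t => Q0 t i) t0 (dz (rshift d i) 0)) :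
  (forall i, derivable_pt_lim (fun t => P1 t i) t0
      ((Astep Hs DH M E a b c (Q0 t0) (P1 t0) *m dz) (lshift d i) 0)) /\
  (forall i, derivable_pt_lim (fun t => Q1 t i) t0
      ((Astep Hs DH M E a b c (Q0 t0) (P1 t0) *m dz) (rshift d i) 0)).
Proof.
pose H t := mxr (Hs (Q0 t)).
pose Mm := mxr M.
pose dP := usubmx dz. pose dQ := dsubmx dz.
have Hp0 : mder (fun t => cv (P0 t)) t0 dP.
  move=> i k; rewrite ord1 !mxE; apply: der_ext (HdP i) => t; by rewrite mxE.
have Hq0 : mder (fun t => cv (Q0 t)) t0 dQ.
  move=> i k; rewrite ord1 !mxE; apply: der_ext (HdQ i) => t; by rewrite mxE.
have HdQ' : forall l, derivable_pt_lim (fun t => Q0 t l) t0 (dQ l 0).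
  by move=> l; rewrite mxE.
have Hfc : mder (fun t => cv (f (Q0 t))) t0 (H t0 *m dQ).
  move=> i k; rewrite ord1.
  have := chain (Hf i) (HHc i) HdQ'.
  apply: der_eqv_ext.
  - rewrite /rsum mxE; apply: eq_bigr => j _; by rewrite /H mxrE.
  - by move=> t; rewrite cvE.
have HHd : mder H t0 (\matrix_(i, j) \sum_l DH i j l (Q0 t0) * dQ l 0).
  move=> i j.
  have := chain (HDH i j) (HDHc i j) HdQ'.
  apply: der_eqv_ext.
  - by rewrite mxE.
  - by move=> t; rewrite /H mxrE.
pose Hd := \matrix_(i, j) \sum_l DH i j l (Q0 t0) * dQ l 0.
pose K t := 1%:M + c *: (H t *m Mm).
have HK : mder K t0 (0 + c *: (Hd *m Mm)).
  apply: mder_add; first exact: mder_const.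
  apply: mder_scale; exact: mder_mulr.
pose p1 t := cv (P1 t).
pose r t := E *: cv (P0 t) - b *: cv (f (Q0 t)) - g *: cv noise.
have Hp1eq : forall t, p1 t = r t - c *: (H t *m (Mm *m p1 t)).
  move=> t; apply/matrixP => i k.
  rewrite /r /H /Mm /p1 -!cv_mulmv !mxE HP1; ring.
have HKp : forall t, K t *m p1 t = r t.
  move=> t; rewrite /K mulmxDl mul1mx -scalemxAl -mulmxA {1}(Hp1eq t).
  by rewrite subrK.
have Hp1inv : forall t, p1 t = invmx (K t) *m r t.
  by move=> t; rewrite -HKp mulKmx // HU.
have Hr : mder r t0 (E *: dP - b *: (H t0 *m dQ) - g *: 0).
  apply: mder_sub; last by apply: mder_scale; exact: mder_const.
  apply: mder_sub; apply: mder_scale => //.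
have [dP1 HdP1] : exists dP1, mder p1 t0 dP1.
  have [Di HDi] := mex_der (mex_inv (fun t => HU (Q0 t)) (mder_ex HK)).
  eexists; apply: mder_ext (fun t => esym (Hp1inv t)) (mder_mul HDi Hr).
have Heq : (0 + c *: (Hd *m Mm)) *m p1 t0 + K t0 *m dP1 = E *: dP - b *: (H t0 *m dQ) - g *: 0.
  apply: mder_unique (mder_mul HK HdP1) _.
  exact: mder_ext (fun t => esym (HKp t)) Hr.
have HdP1e : dP1 = invmx (K t0) *m ((E *: dP - b *: (H t0 *m dQ) - g *: 0) - (0 + c *: (Hd *m Mm)) *m p1 t0).
  by rewrite -Heq [X in X - _]addrC addrK mulKmx // HU.
pose T := Tmat DH (Q0 t0) (Mm *m cv (P1 t0)).
have HK'p : (0 + c *: (Hd *m Mm)) *m p1 t0 = c *: (T *m dQ).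
  rewrite add0r -scalemxAl -mulmxA; congr (_ *: _).
  apply/matrixP => i k; rewrite ord1 mxE [RHS]mxE.
  under eq_bigr do rewrite mxE mulr_suml.
  rewrite exchange_big /=; apply: eq_bigr => m _.
  rewrite [T _ _]mxE mulr_suml /=; apply: eq_bigr => l _.
  rewrite /p1 /=; ring.
pose X := E *: invmx (K t0).
pose Y := - (invmx (K t0) *m (b *: H t0 + c *: T)).
have HdP1f : dP1 = X *m dP + Y *m dQ.
  rewrite HdP1e HK'p /X /Y scaler0 subr0.
  rewrite !mulmxBr mulNmx -mulmxA mulmxDl mulmxDr -!scalemxAl -!scalemxAr opprD addrA.
  done.
pose dQ1 := dQ + a *: (Mm *m dP1) + c *: (Mm *m (H t0 *m dQ)).
have Hq1 : mder (fun t => cv (Q1 t)) t0 dQ1.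
  have Hq1eq : forall t, cv (Q1 t) = cv (Q0 t) + a *: (Mm *m p1 t) + c *: (Mm *m cv (f (Q0 t)))
                 + e *: (Mm *m cv noise).
    move=> t; apply/matrixP => i k; rewrite /Mm /p1 -!cv_mulmv !mxE HQ1 //.
  apply: mder_ext (fun t => esym (Hq1eq t)) _.
  apply: mder_eqv (mder_add (mder_add (mder_add Hq0 (mder_scale a (mder_mull Mm HdP1)))
     (mder_scale c (mder_mull Mm Hfc))) (mder_scale e (mder_mull Mm (mder_const (cv noise) t0)))).
  by rewrite mulmx0 scaler0 addr0.
have HAdz : Astep Hs DH M E a b c (Q0 t0) (P1 t0) *m dz =
   col_mx dP1 (a *: (Mm *m X) *m dP + (1%:M + a *: (Mm *m Y) + c *: (Mm *m H t0)) *m dQ).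
  rewrite /Astep /= -[dz]vsubmxK mul_block_col; congr col_mx.
  by rewrite HdP1f.
have HdQ1 : dQ1 = a *: (Mm *m X) *m dP + (1%:M + a *: (Mm *m Y) + c *: (Mm *m H t0)) *m dQ.
  rewrite /dQ1 HdP1f !mulmxDl mul1mx -!scalemxAl -!mulmxA mulmxDr scalerDr.
  rewrite !addrA; congr (_ + _ + _); rewrite [RHS]addrC; congr (_ + _); by rewrite /X -scalemxAl.
split.
- move=> i; rewrite HAdz col_mxEu.
  apply: der_eqv_ext _ _ (HdP1 i 0) => // t; by rewrite /p1 cvE.
- move=> i; rewrite HAdz col_mxEd -HdQ1.
  apply: der_eqv_ext _ _ (Hq1 i 0) => // t; by rewrite cvE.
Qed.

End Part4.

Section Part5.
Set Implicit Arguments. Unset Strict Implicit. Unset Printing Implicit Defensive.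
Local Open Scope ring_scope.

Lemma sylvester n (A B : 'M[R]_n) : \det (1%:M + A *m B) = \det (1%:M + B *m A).
Proof.
have e1 : block_mx 1%:M (-A) B 1%:M = block_mx 1%:M 0 B 1%:M *m block_mx 1%:M (-A) 0 (1%:M + B *m A).
  rewrite mulmx_block ?mul1mx ?mul0mx ?mulmx0 ?mulmx1 ?addr0 ?add0r ?mulmxN.
  by rewrite [1%:M + _]addrC addKr.
have e2 : block_mx 1%:M (-A) B 1%:M = block_mx (1%:M + A *m B) (-A) 0 1%:M *m block_mx 1%:M 0 B 1%:M.
  rewrite mulmx_block ?mul1mx ?mul0mx ?mulmx0 ?mulmx1 ?addr0 ?add0r ?mulNmx.
  by rewrite addrK.
have := congr1 determinant (etrans (esym e1) e2).
rewrite !det_mulmx (@det_lblock _ n n) !(@det_ublock _ n n) !det1 !mul1r !mulr1.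
by move=> ->.
Qed.

Lemma det_Astep d (Hs : vec d -> rmat d d) DH (M : rmat d d) (E a b c : R) (q0 p1 : vec d) :
  (1%:M + c *: (mxr (Hs q0) *m mxr M)) \in unitmx ->
  \det (Astep Hs DH M E a b c q0 p1) = E ^+ d.
Proof.
move=> HU; rewrite /Astep /=.
set H := mxr (Hs q0); set Mm := mxr M.
set K := 1%:M + c *: (H *m Mm).
set D := invmx K.
set Y := - (D *m _).
set W' := 1%:M + c *: (Mm *m H).
have -> : block_mx (E *: D) Y (a *: (Mm *m (E *: D))) (1%:M + a *: (Mm *m Y) + c *: (Mm *m H))
   = block_mx 1%:M 0 (a *: Mm) 1%:M *m block_mx (E *: D) Y 0 W'.
  rewrite mulmx_block ?mul1mx ?mul0mx ?mulmx0 ?mulmx1 ?addr0 ?add0r -?scalemxAl.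
  by rewrite /W' addrCA addrA.
rewrite det_mulmx det_lblock det_ublock !det1 !mul1r detZ det_inv.
have -> : \det W' = \det K.
  by rewrite /W' /K scalemxAl sylvester -scalemxAr.
have HK : \det K != 0 by rewrite -unitfE -unitmxE.
by rewrite -mulrA mulVf // mulr1.
Qed.

End Part5.

Section Part6.
Set Implicit Arguments. Unset Strict Implicit. Unset Printing Implicit Defensive.
Local Open Scope ring_scope.

Lemma rdetE n (A : rmat n n) : rdet A = \det (mxr A).
Proof.
rewrite /rdet /determinant; apply: eq_bigr => s _.
rewrite -/(@GRing.mul R _ _).
case: (odd_perm s) => /=; rewrite ?expr1 ?expr0; congr (_ * _); apply: eq_bigr => i _; by rewrite mxE.
Qed.

Lemma mxr_mulmm n k m (A : rmat n k) (B : rmat k m) : mxr (mulmm A B) = mxr A *m mxr B.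
Proof. apply/matrixP => i j; rewrite !mxE /mulmm /rsum; apply: eq_bigr => l _; by rewrite !mxE. Qed.

Lemma mxr_rid n : mxr (rid n) = 1%:M.
Proof. apply/matrixP => i j; rewrite !mxE /rid; by case: (i == j). Qed.

Lemma unit_of_inv n (A : rmat n n) : invertible A -> mxr A \in unitmx.
Proof.
move=> [B [HB1 _]].
have : mxr B *m mxr A = 1%:M by rewrite -mxr_mulmm HB1 mxr_rid.
by case/mulmx1_unit.
Qed.

Lemma mxr_K d (Hs : rmat d d) (M : rmat d d) (k : R) :
  mxr (fun i j => rid d i j + k * mulmm Hs M i j) = 1%:M + k *: (mxr Hs *m mxr M).
Proof.
apply/matrixP => i j; rewrite -mxr_mulmm !mxE /rid; by case: (i == j).
Qed.

Fixpoint prodA N (A : nat -> 'M[R]_N) k : 'M[R]_N :=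
  match k with 0%N => 1%:M | k'.+1 => A k' *m prodA A k' end.

Lemma det_prodA N (A : nat -> 'M[R]_N) k e : (forall k, \det (A k) = e) -> \det (prodA A k) = e ^+ k.
Proof.
move=> H; elim: k => [|k IH] /=; first by rewrite det1 expr0.
by rewrite det_mulmx H IH exprS.
Qed.

Lemma mul_colE N (A B : 'M[R]_N) i j : (A *m col j B) i 0 = (A *m B) i j.
Proof. rewrite !mxE; apply: eq_bigr => l _; by rewrite mxE. Qed.

Lemma split_lshift' m n (i : 'I_m) : split (lshift n i) = inl i.
Proof. exact: (unsplitK (inl i)). Qed.
Lemma split_rshift' m n (i : 'I_n) : split (rshift m i) = inr i.
Proof. exact: (unsplitK (inr i)). Qed.

Local Open Scope R_scope.
Lemma exp_nat x m : exp (x * INR m) = pow (exp x) m.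
Proof.
elim: m => [|m IH]; first by rewrite Rmult_0_r exp_0.
rewrite S_INR Rmult_plus_distr_l Rmult_1_r exp_plus IH /=; exact: Rmult_comm.
Qed.

End Part6.

Section Part7.
Set Implicit Arguments. Unset Strict Implicit. Unset Printing Implicit Defensive.
Local Open Scope R_scope.

Definition cE v h := exp (- v * h).
Definition cA v h := h * (1 - v * h / 2) * exp (v * h).
Definition cB v h := h * (1 + v * h / 2) * exp (- v * h).
Definition cC (h : R) := h ^ 2 / 2.
Definition cG v h := (1 + v * h / 2) * exp (- v * h).
Definition cH (h : R) := h / 2.

Local Open Scope ring_scope.
Lemma HU_of d (Hs : vec d -> rmat d d) (M : rmat d d) h
  (HD : forall q : vec d, invertible (fun i j : 'I_d => rid d i j + cC h * mulmm (Hs q) M i j)) :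
  forall q, 1%:M + cC h *: (mxr (Hs q) *m mxr M) \in unitmx.
Proof. by move=> q; rewrite -mxr_K; apply: unit_of_inv; exact: HD. Qed.

Lemma claim d (f : vec d -> vec d) (Hs : vec d -> rmat d d) DH (M : rmat d d) v h
  (noise : nat -> vec d)
  (Hf : forall i q j, is_partial (fun x => f x i) q j (Hs q i j))
  (HHc : forall i j, rcontinuous (fun x => Hs x i j))
  (HDH : forall i j q l, is_partial (fun x => Hs x i j) q l (DH i j l q))
  (HDHc : forall i j l, rcontinuous (DH i j l))
  (HU : forall q, 1%:M + cC h *: (mxr (Hs q) *m mxr M) \in unitmx)
  (P Q : vec d -> vec d -> nat -> vec d)
  (H0 : forall p q, P p q 0%N = p /\ Q p q 0%N = q)
  (Hstep : forall p q (k : nat), scheme_step f Hs M v h (noise k)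
       (P p q k) (Q p q k) (P p q k.+1) (Q p q k.+1))
  (p q : vec d) (j : 'I_(d + d)) :
  forall k,
   (forall i, derivable_pt_lim
      (fun t => P (zP (upd (pair_vec p q) j t)) (zQ (upd (pair_vec p q) j t)) k i) (pair_vec p q j)
      (prodA (fun k => Astep Hs DH M (cE v h) (cA v h) (cB v h) (cC h) (Q p q k) (P p q k.+1)) k
         (lshift d i) j)) /\
   (forall i, derivable_pt_lim
      (fun t => Q (zP (upd (pair_vec p q) j t)) (zQ (upd (pair_vec p q) j t)) k i) (pair_vec p q j)
      (prodA (fun k => Astep Hs DH M (cE v h) (cA v h) (cB v h) (cC h) (Q p q k) (P p q k.+1)) k
         (rshift d i) j)).
Proof.
set z0 := pair_vec p q.
have HzP : zP z0 = p.
  by apply: functional_extensionality => i; rewrite /zP /z0 /pair_vec split_lshift'.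
have HzQ : zQ z0 = q.
  by apply: functional_extensionality => i; rewrite /zQ /z0 /pair_vec split_rshift'.
have Hz : upd z0 j (z0 j) = z0 := upd_id z0 j.
elim => [|k [IHP IHQ]].
- have Hb : forall (s : 'I_(d + d)),
    derivable_pt_lim (fun t => upd z0 j t s) (z0 j) ((1%:M : 'M[R]_(d + d)) s j).
    move=> s; rewrite mxE; case: (eqVneq s j) => [->|Hne].
      have -> : (true%:R : R) = 1 by []. apply: der_ext (derivable_pt_lim_id _) => t; by rewrite upd_same.
    have -> : (false%:R : R) = 0 by []. apply: der_ext (derivable_pt_lim_const _ _) => t.
    by rewrite /upd (negbTE Hne).
  split => i /=.
  + apply: der_ext (Hb (lshift d i)) => t; by rewrite (proj1 (H0 _ _)).
  + apply: der_ext (Hb (rshift d i)) => t; by rewrite (proj2 (H0 _ _)).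
- have := @step d f Hs DH M (cE v h) (cA v h) (cB v h) (cC h) (cH h) (cG v h) (noise k)
    Hf HHc HDH HDHc HU
    (fun t => P (zP (upd z0 j t)) (zQ (upd z0 j t)) k)
    (fun t => Q (zP (upd z0 j t)) (zQ (upd z0 j t)) k)
    (fun t => P (zP (upd z0 j t)) (zQ (upd z0 j t)) k.+1)
    (fun t => Q (zP (upd z0 j t)) (zQ (upd z0 j t)) k.+1)
    (z0 j) (col j (prodA (fun k => Astep Hs DH M (cE v h) (cA v h) (cB v h) (cC h) (Q p q k) (P p q k.+1)) k))
    (fun t i => proj1 (Hstep _ _ k i)) (fun t i => proj2 (Hstep _ _ k i)).
  case.
  + by move=> i; rewrite mxE; exact: IHP.
  + by move=> i; rewrite mxE; exact: IHQ.
  rewrite /= Hz HzP HzQ => HP HQ.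
  split => i; rewrite -mul_colE; [exact: HP | exact: HQ].
Qed.

End Part7.


Theorem mainTheorem2 (d m : nat) (Hdm : (d <= m)%nat)
  (F : vec d -> R) (f : vec d -> vec d) (Hs : vec d -> rmat d d)
  (M : rmat d d) (v h : R) (sigma : rmat d m) (dW : nat -> vec m)
  (HF : smooth F)
  (Hf : forall q i, is_partial F q i (f q i))
  (HHs : forall q i j, is_partial (fun x => f x i) q j (Hs q i j))
  (HM : sym_posdef M) (Hv : 0 < v) (Hh : 0 < h)
  (HD : forall q : vec d, invertible (fun i j : 'I_d => rid d i j + h ^ 2 / 2 * mulmm (Hs q) M i j))
  (P Q : vec d -> vec d -> nat -> vec d)
  (H0 : forall p q, P p q 0%nat = p /\ Q p q 0%nat = q)
  (Hstep : forall p q (k : nat),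
     scheme_step f Hs M v h (mulmv sigma (dW k.+1))
       (P p q k) (Q p q k) (P p q k.+1) (Q p q k.+1)) :
  forall (n : nat), (1 <= n)%nat -> forall p q : vec d,
    exists J : rmat (d + d) (d + d),
      (forall k j, is_partial
          (fun z => pair_vec (P (zP z) (zQ z) n) (Q (zP z) (zQ z) n) k)
          (pair_vec p q) j (J k j))
      /\ rdet J = exp (- v * (INR n * h) * INR d).
Proof.
move=> n Hn p q.
have Hfs : forall i, smooth (fun x => f x i) := smooth_partial (G := fun j x => f x j) HF Hf.
have HHs_s : forall i j, smooth (fun x => Hs x i j) :=
  fun i => smooth_partial (G := fun j x => Hs x i j) (Hfs i) (fun x j => HHs x i j).
have HHc : forall i j, rcontinuous (fun x => Hs x i j) := fun i j => smooth_cont (HHs_s i j).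
have [G HG] := mychoice (fun ij : 'I_d * 'I_d => smooth_C1 (HHs_s ij.1 ij.2)).
pose DH i j := G (i, j).
have HDH : forall i j q l, is_partial (fun x => Hs x i j) q l (DH i j l q) :=
  fun i j q l => proj1 (HG (i, j)) q l.
have HDHc : forall i j l, rcontinuous (DH i j l) := fun i j l => proj2 (HG (i, j)) l.
have HU := HU_of HD.
pose A := fun k => Astep Hs DH M (cE v h) (cA v h) (cB v h) (cC h) (Q p q k) (P p q k.+1).
exists (fun a b => prodA A n a b).
split.
- move=> k j.
  have [HPc HQc] := claim (noise := fun k => mulmv sigma (dW k.+1)) (fun i q j => HHs q i j)
     HHc HDH HDHc HU H0 Hstep p q j n.
  rewrite /is_partial -(splitK k); case: (split k) => i /=.
  + apply: der_ext (HPc i) => t; by rewrite /pair_vec split_lshift'.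
  + apply: der_ext (HQc i) => t; by rewrite /pair_vec split_rshift'.
- rewrite rdetE.
  have -> : mxr (fun a b => prodA A n a b) = prodA A n by apply/matrixP => a b; rewrite mxE.
  rewrite (@det_prodA _ _ _ (cE v h ^+ d)) => [|k]; last exact: det_Astep (HU _).
  rewrite -!RpowE -pow_mult /cE -exp_nat; congr exp; rewrite mult_INR !RmultE !RoppE; ring.
Qed.
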